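(* Let $h$ be a hospital and $k_h=\lceil B_h/\underline{w}_h\rceil$. Define $\mathrm{Ch}_h:2^{X_h}\to2^{X_h}$ by: given $X'\subseteq X_h$, sort $X'$ in non-increasing order of utility per unit wage $f_h(x)/x_W$ (ties broken by a fixed order) and return the first $\min\{k_h,|X'|\}$ contracts. Then $\mathrm{Ch}_h$ satisfies SUB, IRC, LAD and COM.
   Context: Hospital $h$ has a finite set $X_h$ of contracts $x=(d,h,w)$ with wages $x_W=w$, $0<x_W\le B_h$, where $B_h>0$ is its budget; distinct contracts in $X_h$ may involve the same doctor. Its utility is additive: $f_h(x)>0$ and $f_h(Y)=\sum_{x\in Y}f_h(x)$. $w_h(Y)=\sum_{x\in Y}x_W$ for $Y\subseteq X_h$, $\underline{w}_h=\min_{x\in X_h}x_W$. For a map $\mathrm{Ch}_h:2^{X_h}\to2^{X_h}$ with $\mathrm{Ch}_h(Y)\subseteq Y$: SUB means for all $Y''\subseteq Y'\subseteq X_h$, $Y''\setminus\mathrm{Ch}_h(Y'')\subseteq Y'\setminus\mathrm{Ch}_h(Y')$; IRC means for $Y'\subseteq X_h$, $Y''\subseteq X_h\setminus Y'$, if $\mathrm{Ch}_h(Y'\cup Y'')\subseteq Y'$ then $\mathrm{Ch}_h(Y')=\mathrm{Ch}_h(Y'\cup Y'')$; LAD means for all $Y''\subseteq Y'\subseteq X_h$, $|\mathrm{Ch}_h(Y'')|\le|\mathrm{Ch}_h(Y')|$; COM means for all $Y''\subseteq Y'\subseteq X_h$ with $w_h(Y'')\le\max\{B_h,w_h(\mathrm{Ch}_h(Y'))\}$,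 $f_h(\mathrm{Ch}_h(Y'))\ge f_h(Y'')$. *)

(* Defs.v *)
From mathcomp Require Import all_boot all_order all_algebra.
Set Implicit Arguments. Unset Strict Implicit. Unset Printing Implicit Defensive.
Import Order.TTheory GRing.Theory Num.Theory.
Local Open Scope ring_scope.

(* A hospital's contract set X_h is a finite type X; wages w, utilities f,
   budget B, all in an archimedean real field R. *)
Section Hospital.
Variables (R : archiRealFieldType) (X : finType).

Definition wsum (w : X -> R) (Y : {set X}) : R := \sum_(x in Y) w x.
Definition fsum (f : X -> R) (Y : {set X}) : R := \sum_(x in Y) f x.

(* underline w_h = min_{x in X_h} x_W ; the default B is harmless because
   every wage is <= B (and X empty makes everything trivial). *)
Definition wmin (w : X -> R) (B : R) : R := \big[Num.min/B]_(x : X) w x.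

Definition kh (w : X -> R) (B : R) : nat := `|Num.ceil (B / wmin w B)|%N.

Definition prec (f w : X -> R) (tie : rel X) : rel X :=
  fun x y => (f y / w y < f x / w x) || ((f x / w x == f y / w y) && tie x y).

Definition Ch (f w : X -> R) (B : R) (tie : rel X) (Y : {set X}) : {set X} :=
  [set x in take (kh w B) (sort (prec f w tie) (enum Y))].

Definition SUB (C : {set X} -> {set X}) : Prop :=
  forall Y2 Y1 : {set X}, Y2 \subset Y1 -> (Y2 :\: C Y2) \subset (Y1 :\: C Y1).

Definition IRC (C : {set X} -> {set X}) : Prop :=
  forall Y1 Y2 : {set X}, [disjoint Y2 & Y1] ->
    C (Y1 :|: Y2) \subset Y1 -> C Y1 = C (Y1 :|: Y2).

Definition LAD (C : {set X} -> {set X}) : Prop :=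
  forall Y2 Y1 : {set X}, Y2 \subset Y1 -> (#|C Y2| <= #|C Y1|)%N.

Definition COM (f w : X -> R) (B : R) (C : {set X} -> {set X}) : Prop :=
  forall Y2 Y1 : {set X}, Y2 \subset Y1 ->
    wsum w Y2 <= Num.max B (wsum w (C Y1)) ->
    fsum f Y2 <= fsum f (C Y1).

End Hospital.

(* Main.v *)
Require Import Defs.
From mathcomp Require Import all_boot all_order all_algebra.
From mathcomp Require Import zify.
Import Order.TTheory GRing.Theory Num.Theory.
Local Open Scope ring_scope.

Set Implicit Arguments. Unset Strict Implicit.
Section S.
Variables (R : archiRealFieldType) (X : finType) (f w : X -> R) (B : R) (tie : rel X).
Hypotheses (hB : 0 < B) (hw : forall x, 0 < w x /\ w x <= B) (hf : forall x, 0 < f x)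
  (tie_refl : reflexive tie) (tie_total : total tie)
  (tie_trans : transitive tie) (tie_anti : antisymmetric tie).

Local Notation pr := (prec f w tie).
Local Notation k := (kh w B).
Local Notation C := (Ch f w B tie).

Lemma pr_trans : transitive pr.
Proof.
move=> y x z; rewrite /prec => /orP[h1|/andP[/eqP e1 t1]] /orP[h2|/andP[/eqP e2 t2]].
- by rewrite (lt_trans h2 h1).
- by rewrite -e2 h1.
- by rewrite e1 h2.
- by rewrite e1 e2 eqxx (tie_trans t1 t2) orbT.
Qed.

Lemma pr_total : total pr.
Proof.
move=> x y; rewrite /prec.
case: (ltgtP (f x / w x) (f y / w y)) => h; rewrite ?h ?orbT //=.

Qed.

Lemma pr_anti x y : pr x y -> pr y x -> x = y.
Proof.
rewrite /prec => /orP[h1|/andP[/eqP e1 t1]] /orP[h2|/andP[/eqP e2 t2]].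
- by move: (lt_trans h1 h2); rewrite ltxx.
- by move: h1; rewrite e2 ltxx.
- by move: h2; rewrite e1 ltxx.
- by apply: tie_anti; rewrite t1 t2.
Qed.

Lemma pr_le x y : pr x y -> f y / w y <= f x / w x.
Proof. by case/orP => [/ltW//|/andP[/eqP->]]. Qed.

Let s (Y : {set X}) := sort pr (enum Y).

Lemma mem_s (Y : {set X}) (x : X) : (x \in s Y) = (x \in Y).
Proof. by rewrite mem_sort mem_enum. Qed.

Lemma ChE (Y : {set X}) (x : X) : (x \in C Y) = (x \in take k (s Y)).
Proof. by rewrite /Ch inE. Qed.

Lemma ChP1 (Y : {set X}) : C Y \subset Y.
Proof. by apply/subsetP => x; rewrite ChE => /mem_take; rewrite mem_s. Qed.

Lemma ChP2 (Y : {set X}) : #|C Y| = minn k #|Y|.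
Proof.
rewrite /Ch cardsE; have/card_uniqP-> : uniq (take k (s Y)).
  by apply: take_uniq; rewrite sort_uniq enum_uniq.
by rewrite size_take_min size_sort cardE.
Qed.

Lemma ChP3 (Y : {set X}) (x y : X) : x \in C Y -> y \in Y -> pr y x -> y != x -> y \in C Y.
Proof.
rewrite !ChE -mem_s => xC yY pyx nyx.
have xs := mem_take xC.
rewrite in_take // in xC; rewrite in_take //.
case: (ltnP (index y (s Y)) k) => // hk.
have lt : (index x (s Y) < index y (s Y))%N by apply: leq_trans xC hk.
have := @sorted_ltn_nth _ pr pr_trans x (s Y) (sort_sorted pr_total _)
  (index x (s Y)) (index y (s Y)).
rewrite !inE !index_mem xs yY !nth_index // => /(_ isT isT lt) pxy.
by move: nyx; rewrite (pr_anti pxy pyx) eqxx.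
Qed.

Lemma ChP4 (Y : {set X}) (x y : X) : x \in Y -> x \notin C Y -> y \in C Y -> pr y x.
Proof.
move=> xY xC yC; case/orP: (pr_total y x) => // pxy.
have nxy : x != y by apply/eqP => e; move: xC; rewrite e yC.
by move: xC; rewrite (ChP3 yC xY pxy nxy).
Qed.

Lemma ChSUB (Y2 Y1 : {set X}) (x : X) : Y2 \subset Y1 -> x \in Y2 -> x \notin C Y2 -> x \notin C Y1.
Proof.
move=> sub xY2 xC2; apply/negP => xC1.
have : (#|x |: C Y2| <= #|C Y1|)%N.
  apply: subset_leq_card; apply/subsetP => z; rewrite in_setU1 => /orP[/eqP->//|zC].
  apply: (ChP3 xC1).
  - by apply: (subsetP sub); apply: (subsetP (ChP1 Y2)).
  - exact: ChP4 xY2 xC2 zC.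
  - by apply/eqP => e; move: xC2; rewrite -e zC.
have : (#|C Y2| <= #|Y2 :\ x|)%N.
  apply: subset_leq_card; apply/subsetP => z zC; rewrite in_setD1 (subsetP (ChP1 Y2)) // andbT.
  by apply/eqP => e; move: xC2; rewrite -e zC.
have := cardsD1 x Y2; have := subset_leq_card sub.
rewrite cardsU1 xC2 xY2 !ChP2; lia.
Qed.

Lemma wmin_pos : 0 < wmin w B.
Proof.
rewrite /wmin; elim/big_ind: _ => //.
- by move=> a b ha hb; rewrite lt_min ha hb.
- by move=> x _; exact: (hw x).1.
Qed.

Lemma wmin_le x : wmin w B <= w x.
Proof. by rewrite /wmin (bigD1 x) //= ge_min lexx. Qed.

Lemma k_ge : B <= k%:R * wmin w B.
Proof.
have hp := wmin_pos.
have hq : 0 < B / wmin w B by rewrite divr_gt0.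
rewrite /kh natr_absz ger0_norm ?ceil_ge0; last by apply: lt_trans hq; rewrite ltrN10.
have {1}->: B = B / wmin w B * wmin w B by rewrite divfK // lt0r_neq0.
rewrite ler_pM2r //; exact: ceil_ge.
Qed.

End S.

Theorem lemma1 (R : archiRealFieldType) (X : finType)
  (f w : X -> R) (B : R) (tie : rel X)
  (hB : 0 < B)
  (hw : forall x, 0 < w x /\ w x <= B)
  (hf : forall x, 0 < f x)
  (tie_refl : reflexive tie) (tie_total : total tie)
  (tie_trans : transitive tie) (tie_anti : antisymmetric tie) :
  let C := Ch f w B tie in
  [/\ SUB C, IRC C, LAD C & COM f w B C].
Proof.
cbv zeta; split.
- move=> Y2 Y1 sub; apply/subsetP => x; rewrite !in_setD => /andP[xC xY].
  by rewrite (subsetP sub) // andbT; exact: (ChSUB hB tie_total tie_trans tie_anti sub xY xC).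
- move=> Y1 Y2 _ sub; apply/eqP; rewrite eq_sym eqEcard; apply/andP; split.
    apply/subsetP => x xU; have xY1 := subsetP sub x xU.
    apply/negPn/negP => xC1.
    by have := ChSUB hB tie_total tie_trans tie_anti (subsetUl Y1 Y2) xY1 xC1; rewrite xU.
  rewrite !ChP2; have := subset_leq_card (subsetUl Y1 Y2); lia.
- by move=> Y2 Y1 sub; rewrite !ChP2; have := subset_leq_card sub; lia.
move=> Y2 Y1 sub hw2.
case: (leqP #|Y1| (kh w B)) => hk.
  have e : Ch f w B tie Y1 = Y1 by apply/eqP; rewrite eqEcard ChP1 ChP2 /=; lia.
  rewrite e /fsum (big_setID (A:=Y1) Y2) /= (elimT setIidPr sub) lerDl.
  by apply: sumr_ge0 => x _; exact: ltW.
set CY := Ch f w B tie Y1.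
have hC : #|CY| = kh w B by rewrite ChP2; lia.
have hwC : B <= wsum w CY.
  apply: le_trans (k_ge hB hw) _.
  rewrite -hC mulr_natl -sumr_const /wsum; apply: ler_sum => x _; exact: wmin_le.
move: hw2; rewrite (elimT max_idPr hwC) => hw2.
set D := Y2 :\: CY; set E := CY :\: Y2.
have fY2 : fsum f Y2 = fsum f (Y2 :&: CY) + fsum f D by rewrite /fsum (big_setID CY).
have fC : fsum f CY = fsum f (Y2 :&: CY) + fsum f E by rewrite /fsum (big_setID Y2) setIC.
have wY2 : wsum w Y2 = wsum w (Y2 :&: CY) + wsum w D by rewrite /wsum (big_setID CY).
have wC : wsum w CY = wsum w (Y2 :&: CY) + wsum w E by rewrite /wsum (big_setID Y2) setIC.
have hDE : wsum w D <= wsum w E by move: hw2; rewrite wY2 wC lerD2l.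
rewrite fY2 fC lerD2l.
pose r := \big[Num.max/0]_(x in D) (f x / w x).
have r0 : 0 <= r.
  rewrite /r; elim/big_ind: _ => //.
  - by move=> a b ha hb; rewrite le_max ha.
  - by move=> x _; rewrite divr_ge0 // ltW // (hf x, (hw x).1).
have hD x : x \in D -> f x <= r * w x.
  move=> xD; have wx := (hw x).1.
  rewrite -{1}(divfK (lt0r_neq0 wx) (f x)) ler_pM2r //.
  by rewrite /r (bigD1 x) //= le_max lexx.
have hE y : y \in E -> r * w y <= f y.
  rewrite in_setD => /andP[_ yC]; have wy := (hw y).1.
  rewrite -[leRHS](divfK (lt0r_neq0 wy) (f y)) ler_pM2r //.
  rewrite /r; elim/big_ind: _ => //.
  - by rewrite divr_ge0 // ltW // hf.
  - by move=> a b ha hb; rewrite ge_max ha hb.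
  move=> x; rewrite in_setD => /andP[xC xY2].
  apply: pr_le; apply: (ChP4 tie_total tie_trans tie_anti _ xC yC).
  exact: (subsetP sub).
apply: (@le_trans _ _ (\sum_(x in D) r * w x)); first exact: ler_sum.
rewrite -mulr_sumr; apply: (@le_trans _ _ (r * wsum w E)).
  exact: ler_wpM2l.
rewrite /wsum mulr_sumr; exact: ler_sum.
Qed.
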